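(* Fix $p\in(0,1)$ and consider the Alternating Path Randomized Design. Let $\mathcal{P}_i=(v_{i,1},\dots,v_{i,k(i)+1})$ be a component and write $y_j=Y_{v_{i,j},v_{i,j+1}}$ for $j=1,\dots,k(i)$. If $\mathcal{P}_i$ is a path ($v_{i,k(i)+1}\neq v_{i,1}$), then \[\mathrm{Var}(\hat\Gamma_i)=\frac1p\sum_{j=1}^{k(i)}y_j^2+2\sum_{1\le j<q\le k(i)}p^{q-j-1}y_jy_q.\] If $\mathcal{P}_i$ is a cycle, then, with $k=k(i)$, \[\mathrm{Var}(\hat\Gamma_i)=\frac1p\sum_{j=1}^{k-1}y_j^2+2\sum_{1\le j<q\le k-1}p^{q-j-1}y_jy_q+\frac{p^2+2p-p^{k-1}}{1+p^{k-1}}\,y_k^2+2\sum_{j=1}^{k-1}(-1)^j\Big(\frac{(1-(-p)^{k-1-j})(1-(-p)^{j-1})}{1+p^{k-1}}-1\Big)y_jy_k.\]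
   Context: Setting: $2N$ agents; $\mathbb{M}^t,\mathbb{M}^c$ are one-to-one matchings (sets of unordered pairs of distinct agents, each agent in at most one pair); each pair $(a,b)$ has a fixed real potential outcome $Y_{a,b}$. The disagreement set $\triangle\mathbb{M}^{(t,c)}=(\mathbb{M}^t\cup\mathbb{M}^c)\setminus(\mathbb{M}^t\cap\mathbb{M}^c)$, viewed as a graph, has connected components $\mathcal{P}_1,\dots,\mathcal{P}_m$, each an alternating path or cycle: a sequence $(v_{i,1},\dots,v_{i,k(i)+1})$ whose consecutive pairs $e_{i,j}=(v_{i,j},v_{i,j+1})$, $j=1,\dots,k(i)$, are its edges, alternating between $\triangle\mathbb{M}^{(t,c)}_t=\triangle\mathbb{M}^{(t,c)}\cap\mathbb{M}^t$ and $\triangle\mathbb{M}^{(t,c)}_c=\triangle\mathbb{M}^{(t,c)}\cap\mathbb{M}^c$; a cycle if $v_{i,1}=v_{i,k(i)+1}$, a path otherwise. Alternating Path Randomized Design with parameter $p$: indicators $W_{i,j}\in\{0,1\}$, independent across components; within $\mathcal{P}_i$, $\mathbb{P}(W_{i,1}=1)=p/(1+p)$; for $2\le j\le k(i)$ (path) or $2\le j\le k(i)-1$ (cycle), conditionally on $W_{i,1},\dots,W_{i,j-1}$, $W_{i,j}=1$ with probability $p$ if $W_{i,j-1}=0$ and $W_{i,j}=0$ if $W_{i,j-1}=1$; for a cycle, $W_{i,k(i)}=1$ iff $W_{i,1}=W_{i,k(i)-1}=0$. Path-level Horvitz–Thompson estimator: $\hat\Gamma_i=\sum_{j:\,e_{i,j}\in\triangle\mathbb{M}^{(t,c)}_t}\frac{W_{i,j}Y_{e_{i,j}}}{\mathbb{P}(W_{i,j}=1)}-\sum_{j:\,e_{i,j}\in\triangle\mathbb{M}^{(t,c)}_c}\frac{W_{i,j}Y_{e_{i,j}}}{\mathbb{P}(W_{i,j}=1)}$.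 *)

(* Defs.v *)
From mathcomp Require Import all_boot all_order all_algebra.
Set Implicit Arguments. Unset Strict Implicit. Unset Printing Implicit Defensive.
Import Order.TTheory GRing.Theory Num.Theory.
Local Open Scope ring_scope.

Definition is_matching (A : finType) (M : {set {set A}}) : Prop :=
  (forall e, e \in M -> #|e| = 2%N) /\
  (forall e f, e \in M -> f \in M -> e != f -> [disjoint e & f]).

Definition disagree (A : finType) (Mt Mc : {set {set A}}) : {set {set A}} :=
  (Mt :|: Mc) :\: (Mt :&: Mc).

(* 1-based indexing as in the paper: vertices v 1, ..., v (k+1);
   edge j = (v j, v (j+1)) for j = 1..k. *)
Definition edge (A : finType) (v : nat -> A) (j : nat) : {set A} :=
  [set v j; v j.+1].

(* (v 1, ..., v (k+1)) is a connected component of the disagreement graph,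
   traversed as an alternating path or cycle. *)
Definition alt_component (A : finType) (Mt Mc : {set {set A}}) (k : nat)
    (v : nat -> A) : Prop :=
  [/\ (0 < k)%N,
      (forall j, (1 <= j <= k)%N -> edge v j \in disagree Mt Mc),
      (forall j, (1 <= j < k)%N ->
          (edge v j \in Mt) = (edge v j.+1 \in Mc)),
      (forall i j, (1 <= i)%N -> (i < j)%N -> (j <= k.+1)%N -> v i = v j ->
          i = 1%N /\ j = k.+1)
    & (forall e, e \in disagree Mt Mc ->
          (exists2 j, (1 <= j <= k.+1)%N & v j \in e) ->
          exists2 j, (1 <= j <= k)%N & e = edge v j)].


(* W_j (1-based) read off an assignment w : {ffun 'I_k -> bool}; w i is W_(i+1). *)
Definition wv (k : nat) (w : {ffun 'I_k -> bool}) (j : nat) : bool :=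
  if insub j.-1 is Some i then w i else false.

Definition init_pr {R : realFieldType} (p : R) (b : bool) : R := if b then p / (1 + p) else 1 / (1 + p).

(* P(W_j = b | W_(j-1) = a) *)
Definition trans_pr {R : realFieldType} (p : R) (a b : bool) : R :=
  if a then (if b then 0 else 1) else (if b then p else 1 - p).

(* joint law of (W_1, ..., W_k) under the Alternating Path Randomized Design
   on a path (cyc = false) or a cycle (cyc = true) with k edges *)
Definition design_pmf {R : realFieldType} (p : R) (k : nat) (cyc : bool) (w : {ffun 'I_k -> bool}) : R :=
  if cyc then
    init_pr p (wv w 1) *
    (\prod_(2 <= j < k) trans_pr p (wv w j.-1) (wv w j)) *
    (if wv w k == (~~ wv w 1 && ~~ wv w k.-1) then 1 else 0)
  else
    init_pr p (wv w 1) *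
    \prod_(2 <= j < k.+1) trans_pr p (wv w j.-1) (wv w j).
Arguments design_pmf {R} p k cyc.

Definition Expect {R : realFieldType} (p : R) (k : nat) (cyc : bool) (X : {ffun 'I_k -> bool} -> R) : R :=
  \sum_(w : {ffun 'I_k -> bool}) design_pmf p k cyc w * X w.
Arguments Expect {R} p k cyc X.

Definition Var {R : realFieldType} (p : R) (k : nat) (cyc : bool) (X : {ffun 'I_k -> bool} -> R) : R :=
  Expect p k cyc (fun w => X w ^+ 2) - (Expect p k cyc X) ^+ 2.
Arguments Var {R} p k cyc X.

Definition probW1 {R : realFieldType} (p : R) (k : nat) (cyc : bool) (j : nat) : R :=
  Expect p k cyc (fun w => (wv w j)%:R).
Arguments probW1 {R} p k cyc j.

Definition HT {R : realFieldType} (A : finType) (Mt Mc : {set {set A}}) (Y : {set A} -> R)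
    (v : nat -> A) (p : R) (k : nat) (cyc : bool) (w : {ffun 'I_k -> bool}) : R :=
  \sum_(1 <= j < k.+1)
     ((if edge v j \in disagree Mt Mc :&: Mt then 1 else 0)
      - (if edge v j \in disagree Mt Mc :&: Mc then 1 else 0))
     * ((wv w j)%:R * Y (edge v j) / probW1 p k cyc j).

Arguments HT {R A} Mt Mc Y v p k cyc.

(* Main.v *)
Require Import Defs.
From mathcomp Require Import all_boot all_order all_algebra ring lra zify.
Import Order.TTheory GRing.Theory Num.Theory.
Local Open Scope ring_scope.
Set Implicit Arguments. Unset Strict Implicit.

Section S.
Variable R : realFieldType.

Definition ext k (w : {ffun 'I_k -> bool}) (b : bool) : {ffun 'I_k.+1 -> bool} :=
  [ffun i : 'I_k.+1 => if insub (val i) is Some j then w (j : 'I_k) else b].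

Lemma wv_ext k (w : {ffun 'I_k -> bool}) b j :
  wv (ext w b) j = if j.-1 == k then b else wv w j.
Proof.
rewrite /wv; case: insubP => [i Hi Ei | Hn] /=.
  rewrite ffunE; case: insubP => [i' Hi' Ei' | Hn'] /=.
    rewrite Ei in Hi'; rewrite (ltn_eqF Hi').
    case: insubP => [i2 _ E2|]; last by rewrite Hi'.
    by congr (w _); apply: val_inj; rewrite E2 Ei' Ei.
  rewrite Ei in Hn'; have := ltn_ord i; rewrite Ei ltnS => H.
  have -> : j.-1 = k by apply/eqP; rewrite eqn_leq H leqNgt.
  by rewrite eqxx.
rewrite ltnS -ltnNge in Hn; rewrite gtn_eqF //.
by case: insubP => // i2; rewrite (leq_gtF (ltnW Hn)).
Qed.

Lemma sum_ext k (F : {ffun 'I_k.+1 -> bool} -> R) :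
  \sum_w' F w' = \sum_(w : {ffun 'I_k -> bool}) \sum_b F (ext w b).
Proof.
rewrite pair_big /=.
rewrite (reindex (fun x : {ffun 'I_k -> bool} * bool => ext x.1 x.2)) //=.
exists (fun w' : {ffun 'I_k.+1 -> bool} => ([ffun i : 'I_k => w' (widen_ord (leqnSn k) i)], w' ord_max)).
  move=> [w b] _ /=; congr pair.
    apply/ffunP => i; rewrite !ffunE; case: insubP => [j _ E|] /=.
      by congr (w _); apply: val_inj.
    by move=> /negP[]; apply: ltn_ord.
  rewrite ffunE; case: insubP => //= j; by rewrite ltnn.
move=> w' _ /=; apply/ffunP => i; rewrite !ffunE; case: insubP => [j _ E|] /=.
  by rewrite ffunE; congr (w' _); apply: val_inj.
rewrite -ltnNge => H; congr (w' _); apply: val_inj => /=.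
by apply/eqP; rewrite eqn_leq -ltnS H -ltnS ltn_ord.
Qed.
Variable p : R.
Hypothesis p1 : 1 + p != 0.

Definition step (f : bool -> R) (x : R * R) : R * R :=
  (f false * (x.1 * (1 - p) + x.2), f true * (x.1 * p)).
Fixpoint alpha (phi : nat -> bool -> R) n : R * R :=
  if n is n'.+1 then step (phi n) (alpha phi n') else (1 / (1 + p), p / (1 + p)).

Lemma wv_ext_lt k (w : {ffun 'I_k -> bool}) b j : (0 < j <= k)%N -> wv (ext w b) j = wv w j.
Proof. move=> H; rewrite wv_ext; case: eqP => // E; move: H; case: j E => //= j ->; by rewrite ltnn. Qed.
Lemma wv_ext_0 k (w : {ffun 'I_k -> bool}) b : (0 < k)%N -> wv (ext w b) 1 = wv w 1.
Proof. by move=> H; rewrite wv_ext_lt. Qed.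
Lemma wv_ext_k k (w : {ffun 'I_k -> bool}) b : wv (ext w b) k.+1 = b.
Proof. by rewrite wv_ext eqxx. Qed.

Lemma pmf_ext k (w : {ffun 'I_k -> bool}) b : (0 < k)%N ->
  design_pmf p k.+1 false (ext w b) = design_pmf p k false w * trans_pr p (wv w k) b.
Proof.
move=> Hk; rewrite /design_pmf wv_ext_0 // big_nat_recr //= wv_ext_k wv_ext_lt ?Hk ?leqnn // mulrA.
congr (_ * _ * _); apply: eq_big_nat => j /andP[H1 H2].
rewrite !wv_ext_lt //; apply/andP; split; lia.
Qed.

Lemma ffun0_eq (w : {ffun 'I_0 -> bool}) : w = [ffun => false].
Proof. by apply/ffunP => -[]. Qed.

Lemma path_gen k phi (g : bool -> R) : (0 < k)%N ->
  \sum_(w : {ffun 'I_k -> bool}) design_pmf p k false w *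
     ((\prod_(1 <= j < k.+1) phi j (wv w j)) * g (wv w k))
  = (alpha phi k).1 * g false + (alpha phi k).2 * g true.
Proof.
elim: k g => // k IH g _.
case: k IH => [|k] IH.
  rewrite sum_ext (eq_bigr (fun _ => \sum_b init_pr p b * (phi 1%N b * g b))).
    rewrite sumr_const card_ffun card_ord /= expn0 mulr1n.
    rewrite big_bool /= /init_pr; field; done.
  move=> w _; apply: eq_bigr => b _.
  by rewrite /design_pmf big_nat1 big_geq // wv_ext_k mulr1.
rewrite sum_ext.
under eq_bigr => w _ do under eq_bigr => b _ do
  rewrite pmf_ext // big_nat_recr //= wv_ext_k.
pose g' := fun a => \sum_b trans_pr p a b * (phi k.+2 b * g b).
rewrite (eq_bigr (fun w => design_pmf p k.+1 false w *
   (\prod_(1 <= j < k.+2) phi j (wv w j) * g' (wv w k.+1)))).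
  rewrite IH // /g' !big_bool /= /trans_pr /=; ring.
move=> w _.
have E b : \prod_(1 <= j < k.+2) phi j (wv (ext w b) j) = \prod_(1 <= j < k.+2) phi j (wv w j).
  by apply: eq_big_nat => j Hj; rewrite wv_ext_lt //; lia.
under eq_bigr => b _ do rewrite E.
rewrite /g' !big_bool /=; ring.
Qed.

Definition pi0 : R := p / (1 + p).
Definition run n (x : R * R) : R * R :=
  let s := x.1 + x.2 in
  let a := pi0 * s + (x.2 - pi0 * s) * (- p) ^+ n in (s - a, a).

Lemma alpha_S phi n : alpha phi n.+1 = step (phi n.+1) (alpha phi n).
Proof. by []. Qed.

Lemma step_ext f g x : (forall b, f b = g b) -> step f x = step g x.
Proof. by move=> E; rewrite /step !E. Qed.

Lemma alpha_run_aux phi l n :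
  (forall i b, (l < i <= l + n)%N -> phi i b = 1) ->
  alpha phi (l + n) = run n (alpha phi l).
Proof.
elim: n => [|n IH] H.
  rewrite addn0 /run expr0 /=; case: (alpha phi l) => x y /=; congr pair; ring.
rewrite addnS alpha_S (step_ext _ (g := fun _ => 1)); last first.
  move=> b; apply: H; lia.
rewrite IH; last first.
  move=> i b Hi; apply: H; lia.
rewrite /run /step /pi0 /= exprS.
case: (alpha phi l) => x y /=; congr pair; field; done.
Qed.

Lemma alpha_run phi l m : (l <= m)%N ->
  (forall i b, (l < i <= m)%N -> phi i b = 1) ->
  alpha phi m = run (m - l) (alpha phi l).
Proof.
move=> Hlm H; rewrite -{1}(subnKC Hlm); apply: alpha_run_aux.
by rewrite (subnKC Hlm).
Qed.

Definition mark (a : nat) (f : bool -> R) (i : nat) (b : bool) : R :=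
  if i == a then f b else 1.
Definition Ind (b : bool) : R := b%:R.
Definition Cmp (b : bool) : R := 1 - b%:R.

Lemma prod_mark k (w : {ffun 'I_k -> bool}) a f : (0 < a <= k)%N ->
  \prod_(1 <= i < k.+1) mark a f i (wv w i) = f (wv w a).
Proof.
move=> H; rewrite /mark -big_mkcond /=.
by rewrite big_nat1_eq ifT //; lia.
Qed.

Lemma path_E k phi : (0 < k)%N ->
  \sum_(w : {ffun 'I_k -> bool}) design_pmf p k false w *
     (\prod_(1 <= j < k.+1) phi j (wv w j))
  = (alpha phi k).1 + (alpha phi k).2.
Proof.
move=> Hk; have := path_gen phi (fun _ => 1) Hk; rewrite !mulr1 => <-.
by apply: eq_bigr => w _; rewrite mulr1.
Qed.

Lemma run_sum n x : (run n x).1 + (run n x).2 = x.1 + x.2.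
Proof. rewrite /run /=; ring. Qed.

Lemma mark_off a f i b : i != a -> mark a f i b = 1.
Proof. by rewrite /mark => /negbTE ->. Qed.
Lemma mark_on a f b : mark a f a b = f b.
Proof. by rewrite /mark eqxx. Qed.

Lemma EW1 k j : (0 < j <= k)%N ->
  \sum_(w : {ffun 'I_k -> bool}) design_pmf p k false w * Ind (wv w j) = pi0.
Proof.
move=> H.
rewrite (eq_bigr (fun w => design_pmf p k false w *
    \prod_(1 <= i < k.+1) mark j Ind i (wv w i))); last first.
  by move=> w _; rewrite prod_mark.
rewrite path_E; last by lia.
rewrite (alpha_run (l := j)); [|lia|]; last first.
  by move=> i b Hi; rewrite mark_off //; apply/eqP; lia.
rewrite run_sum.
case: j H => [|j] H; first by lia.
rewrite alpha_S (step_ext _ (g := Ind)); last by move=> b; rewrite mark_on.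
rewrite (alpha_run (l := 0)) //; last first.
  by move=> i b Hi; rewrite mark_off //; apply/eqP; lia.
rewrite /run /step /pi0 /Ind /= subn0; field; done.
Qed.

Lemma EW2 k j q : (0 < j)%N -> (j < q)%N -> (q <= k)%N ->
  \sum_(w : {ffun 'I_k -> bool}) design_pmf p k false w * (Ind (wv w j) * Ind (wv w q))
   = pi0 ^+ 2 * (1 - (- p) ^+ (q.-1 - j)).
Proof.
move=> H1 H2 H3.
case: j H1 H2 => [|j] // H1 H2; case: q H2 H3 => [|q] // H2 H3.
pose phi i b := mark j.+1 Ind i b * mark q.+1 Ind i b.
rewrite (eq_bigr (fun w => design_pmf p k false w *
    \prod_(1 <= i < k.+1) phi i (wv w i))); last first.
  by move=> w _; rewrite big_split /= !prod_mark //; lia.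
rewrite path_E; last by lia.
rewrite (alpha_run (l := q.+1)); [|lia|]; last first.
  by move=> i b Hi; rewrite /phi !mark_off ?mulr1 //; apply/eqP; lia.
rewrite run_sum.
rewrite alpha_S (step_ext _ (g := Ind)); last first.
  by move=> b; rewrite /phi mark_on mark_off ?mul1r //; apply/eqP; lia.
rewrite (alpha_run (l := j.+1)); [|lia|]; last first.
  by move=> i b Hi; rewrite /phi !mark_off ?mulr1 //; apply/eqP; lia.
rewrite alpha_S (step_ext _ (g := Ind)); last first.
  by move=> b; rewrite /phi mark_on mark_off ?mulr1 //; apply/eqP; lia.
rewrite (alpha_run (l := 0)) //; last first.
  by move=> i b Hi; rewrite /phi !mark_off ?mulr1 //; apply/eqP; lia.
rewrite /run /step /pi0 /Ind /= subn0; field; done.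
Qed.

Lemma cyc_red m (X : {ffun 'I_m.+1 -> bool} -> R) : (0 < m)%N ->
  \sum_w design_pmf p m.+1 true w * X w =
  \sum_(w : {ffun 'I_m -> bool}) design_pmf p m false w * X (ext w (~~ wv w 1 && ~~ wv w m)).
Proof.
move=> Hm; rewrite sum_ext; apply: eq_bigr => w _.
have E b : design_pmf p m.+1 true (ext w b) =
   design_pmf p m false w * (if b == (~~ wv w 1 && ~~ wv w m) then 1 else 0).
  rewrite /design_pmf /= wv_ext_0 // wv_ext_k wv_ext_lt ?Hm ?leqnn //.
  congr (_ * _ * _); apply: eq_big_nat => j Hj.
  by rewrite !wv_ext_lt //; lia.
rewrite big_bool !E /=.
by case: (~~ wv w 1 && ~~ wv w m) => /=; rewrite !mulr1 !mulr0 !mul0r ?addr0 ?add0r.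
Qed.

Lemma EC2 m : (1 < m)%N ->
  \sum_(w : {ffun 'I_m -> bool}) design_pmf p m false w * (Cmp (wv w 1) * Cmp (wv w m))
   = (1 - p ^+ 2 * (- p) ^+ (m - 2)) / (1 + p) ^+ 2.
Proof.
move=> H1.
case: m H1 => [|m] // H1.
pose phi i b := mark 1 Cmp i b * mark m.+1 Cmp i b.
rewrite (eq_bigr (fun w => design_pmf p m.+1 false w *
    \prod_(1 <= i < m.+2) phi i (wv w i))); last first.
  by move=> w _; rewrite big_split /= !prod_mark //; lia.
rewrite path_E; last by lia.
rewrite alpha_S (step_ext _ (g := Cmp)); last first.
  by move=> b; rewrite /phi mark_on mark_off ?mul1r //; apply/eqP; lia.
rewrite (alpha_run (l := 1)); [|lia|]; last first.
  by move=> i b Hi; rewrite /phi !mark_off ?mulr1 //; apply/eqP; lia.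
rewrite alpha_S (step_ext _ (g := Cmp)); last first.
  by move=> b; rewrite /phi mark_on mark_off ?mulr1 //; apply/eqP; lia.
have -> : (m - 1 = m.+1 - 2)%N by lia.
rewrite /run /step /pi0 /Cmp /=; field; done.
Qed.

Lemma EC3 m j : (1 < j)%N -> (j < m)%N ->
  \sum_(w : {ffun 'I_m -> bool}) design_pmf p m false w *
     (Ind (wv w j) * (Cmp (wv w 1) * Cmp (wv w m)))
   = p / (1 + p) ^+ 3 * (1 + p * (- p) ^+ (j - 2)) * (1 + p * (- p) ^+ (m - 1 - j)).
Proof.
move=> H1 H2.
case: m H2 => [|m] // H2.
case: j H1 H2 => [|j] // H1 H2.
pose phi i b := mark j.+1 Ind i b * (mark 1 Cmp i b * mark m.+1 Cmp i b).
rewrite (eq_bigr (fun w => design_pmf p m.+1 false w *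
    \prod_(1 <= i < m.+2) phi i (wv w i))); last first.
  by move=> w _; rewrite !big_split /= !prod_mark //; lia.
rewrite path_E; last by lia.
rewrite alpha_S (step_ext _ (g := Cmp)); last first.
  by move=> b; rewrite /phi mark_on !mark_off ?mul1r ?mulr1 //; apply/eqP; lia.
rewrite (alpha_run (l := j.+1)); [|lia|]; last first.
  by move=> i b Hi; rewrite /phi !mark_off ?mulr1 //; apply/eqP; lia.
rewrite alpha_S (step_ext (f := phi j.+1) (g := Ind)); last first.
  by move=> b; rewrite /phi mark_on !mark_off ?mulr1 //; apply/eqP; lia.
rewrite (alpha_run (l := 1)); [|lia|]; last first.
  by move=> i b Hi; rewrite /phi !mark_off ?mulr1 //; apply/eqP; lia.
have -> : (j - 1 = j.+1 - 2)%N by lia.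
have -> : (m - j.+1 = m.+1 - 1 - j.+1)%N by lia.
rewrite alpha_S (step_ext (f := phi 1%N) (g := Cmp)); last first.
  by move=> b; rewrite /phi mark_on !mark_off ?mulr1 ?mul1r //; apply/eqP; lia.
rewrite /run /step /pi0 /Cmp /Ind /=; field; done.
Qed.

Lemma sym_split a n (F : nat -> nat -> R) : (forall j q, F j q = F q j) ->
  \sum_(a <= j < n) \sum_(a <= q < n) F j q =
  \sum_(a <= j < n) F j j + 2 * \sum_(a <= j < n) \sum_(j.+1 <= q < n) F j q.
Proof.
move=> Fs; elim: n => [|n IH]; first by rewrite !big_geq // mulr0 addr0.
case: (leqP a n) => Han; last first.
  by rewrite !big_geq // mulr0 addr0.
have L1 : \sum_(a <= j < n.+1) \sum_(a <= q < n.+1) F j q =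
  \sum_(a <= j < n) \sum_(a <= q < n) F j q + \sum_(a <= j < n) F j n +
  (\sum_(a <= q < n) F q n + F n n).
  rewrite big_nat_recr // big_nat_recr //.
  rewrite (eq_bigr (fun j => \sum_(a <= q < n) F j q + F j n)); last first.
    by move=> j _; rewrite big_nat_recr.
  rewrite big_split /= (eq_bigr (fun q => F q n) (fun q _ => Fs n q)); ring.
have L2 : \sum_(a <= j < n.+1) F j j = \sum_(a <= j < n) F j j + F n n.
  by rewrite big_nat_recr.
have L3 : \sum_(a <= j < n.+1) \sum_(j.+1 <= q < n.+1) F j q =
  \sum_(a <= j < n) \sum_(j.+1 <= q < n) F j q + \sum_(a <= j < n) F j n.
  rewrite big_nat_recr //= [X in _ + X]big_geq // addr0.
  rewrite -big_split /=; apply: eq_big_nat => j /andP[_ Hj].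
  by rewrite big_nat_recr.
rewrite L1 L2 L3 IH; ring.
Qed.

Lemma Var_lin k cyc n (c : nat -> R) :
  Var p k cyc (fun w => \sum_(1 <= j < n) c j * Ind (wv w j)) =
  \sum_(1 <= j < n) \sum_(1 <= q < n) c j * c q *
     (Expect p k cyc (fun w => Ind (wv w j) * Ind (wv w q))
      - Expect p k cyc (fun w => Ind (wv w j)) * Expect p k cyc (fun w => Ind (wv w q))).
Proof.
rewrite /Var /Expect.
have E1 : \sum_w design_pmf p k cyc w * (\sum_(1 <= j < n) c j * Ind (wv w j)) ^+ 2 =
  \sum_(1 <= j < n) \sum_(1 <= q < n) c j * c q *
     \sum_w design_pmf p k cyc w * (Ind (wv w j) * Ind (wv w q)).
  rewrite (eq_bigr (fun w => \sum_(1 <= j < n) \sum_(1 <= q < n) design_pmf p k cyc w *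
       (c j * c q * (Ind (wv w j) * Ind (wv w q))))); last first.
    move=> w _; rewrite expr2 big_distrl /= big_distrr /=; apply: eq_bigr => j _.
    rewrite big_distrr /= big_distrr /=; apply: eq_bigr => q _; ring.
  rewrite exchange_big /=; apply: eq_bigr => j _.
  rewrite exchange_big /=; apply: eq_bigr => q _.
  rewrite big_distrr /=; apply: eq_bigr => w _; ring.
have E2 : \sum_w design_pmf p k cyc w * (\sum_(1 <= j < n) c j * Ind (wv w j)) =
  \sum_(1 <= j < n) c j * \sum_w design_pmf p k cyc w * Ind (wv w j).
  rewrite (eq_bigr (fun w => \sum_(1 <= j < n) design_pmf p k cyc w * (c j * Ind (wv w j)))); last first.
    by move=> w _; rewrite big_distrr.
  rewrite exchange_big /=; apply: eq_bigr => j _.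
  rewrite big_distrr /=; apply: eq_bigr => w _; ring.
rewrite E1 E2 expr2 big_distrl /= -sumrB; apply: eq_bigr => j _.
rewrite big_distrr /= -sumrB; apply: eq_bigr => q _; ring.
Qed.

Lemma inD (A : finType) (Mt Mc : {set {set A}}) e :
  e \in disagree Mt Mc -> (e \in Mc) = ~~ (e \in Mt).
Proof.
rewrite /disagree in_setD in_setU in_setI.
by case: (e \in Mt); case: (e \in Mc).
Qed.

Definition sgn (A : finType) (Mt Mc : {set {set A}}) (v : nat -> A) j : R :=
  (if edge v j \in disagree Mt Mc :&: Mt then 1 else 0)
  - (if edge v j \in disagree Mt Mc :&: Mc then 1 else 0).

Lemma sgn_D (A : finType) (Mt Mc : {set {set A}}) v j :
  edge v j \in disagree Mt Mc -> sgn Mt Mc v j = if edge v j \in Mt then 1 else -1.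
Proof.
move=> H; rewrite /sgn !in_setI H /= (inD H).
by case: (edge v j \in Mt) => /=; rewrite ?subr0 ?sub0r.
Qed.

Lemma tpar (A : finType) (Mt Mc : {set {set A}}) k v :
  alt_component Mt Mc k v -> forall j, (0 < j <= k)%N ->
  (edge v j \in Mt) = (edge v 1%N \in Mt) (+) ~~ odd j.
Proof.
case=> Hk HD Halt _ _; elim=> [|j IH] // Hj.
case: j IH Hj => [|j] IH Hj; first by rewrite addbF.
have E : (edge v j.+1 \in Mt) = (edge v j.+2 \in Mc) by apply: Halt; lia.
rewrite (inD (HD j.+2 _)) in E; last by lia.
rewrite -[edge v j.+2 \in Mt]negbK -E IH; last by lia.
by rewrite /= negbK addbN.
Qed.

Lemma sgn_prod (A : finType) (Mt Mc : {set {set A}}) k v j q :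
  alt_component Mt Mc k v -> (0 < j <= k)%N -> (0 < q <= k)%N ->
  sgn Mt Mc v j * sgn Mt Mc v q = (-1) ^+ (j + q).
Proof.
move=> H Hj Hq; have [_ HD _ _ _] := H.
rewrite !sgn_D ?HD // (tpar H Hj) (tpar H Hq) -signr_odd oddD.
case: (edge v 1%N \in Mt); case: (odd j); case: (odd q);
  by rewrite /= ?expr0 ?expr1 ?mulr1 ?mul1r ?mulN1r ?opprK.
Qed.



Lemma cyc_par (A : finType) (Mt Mc : {set {set A}}) k v :
  is_matching Mt -> is_matching Mc -> alt_component Mt Mc k v -> v k.+1 = v 1%N ->
  (3 <= k)%N /\ ~~ odd k.
Proof.
move=> [Mt2 Mtd] [Mc2 Mcd] H Hc; have [Hk HD Halt Hinj _] := H.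
have D2 e : e \in disagree Mt Mc -> #|e| = 2%N.
  rewrite /disagree in_setD in_setU => /andP[_ /orP[]]; [exact: Mt2 | exact: Mc2].
have k3 : (3 <= k)%N.
  case: k Hk HD Halt Hinj Hc H => [|[|[|k]]] // _ HD Halt Hinj Hc H.
    have := D2 _ (HD 1%N isT); rewrite /edge Hc setUid cards1 //.
  have E : edge v 2 = edge v 1%N by rewrite /edge Hc setUC.
  have := Halt 1%N isT; rewrite -E (inD (HD 2 isT)).
  by case: (edge v 2 \in Mt).
split=> //.
have Hne : edge v 1%N != edge v k.
  apply/negP => /eqP E.
  have : v 2 \in edge v k by rewrite -E /edge !inE eqxx orbT.
  rewrite /edge !inE => /orP[] /eqP E2.
    by have := Hinj 2 k isT k3 (leqnSn _) E2; case.
  by have := Hinj 1 2 isT isT (ltnW (ltnW k3)); rewrite Hc in E2; move=> /(_ (esym E2)) [_]; lia.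
have v1a : v 1%N \in edge v 1%N by rewrite /edge !inE eqxx.
have v1b : v 1%N \in edge v k by rewrite /edge !inE -Hc eqxx orbT.
apply/negP => Hodd.
have T : (edge v k \in Mt) = (edge v 1%N \in Mt).
  by rewrite (tpar H) ?Hodd ?addbF //; lia.
have Dk : edge v k \in disagree Mt Mc by apply: HD; lia.
have D1 : edge v 1%N \in disagree Mt Mc by apply: HD; lia.
case E1 : (edge v 1%N \in Mt).
  have := Mtd _ _ E1 (etrans T E1) (Hne).
  by move=> /disjoint_setI0 /setP /(_ (v 1%N)); rewrite in_setI v1a v1b in_set0.
have F1 : edge v 1%N \in Mc by rewrite (inD D1) E1.
have Fk : edge v k \in Mc by rewrite (inD Dk) T E1.
have := Mcd _ _ F1 Fk Hne.
by move=> /disjoint_setI0 /setP /(_ (v 1%N)); rewrite in_setI v1a v1b in_set0.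
Qed.

Lemma core (p0 : p != 0) m (s y : nat -> R) (e2 : nat -> nat -> R) :
  (forall j q, (0 < j <= m)%N -> (0 < q <= m)%N -> s j * s q = (-1) ^+ (j + q)) ->
  (forall j, (0 < j <= m)%N -> e2 j j = pi0) ->
  (forall j q, (0 < j)%N -> (j < q)%N -> (q <= m)%N ->
     e2 j q = pi0 ^+ 2 * (1 - (- p) ^+ (q.-1 - j)) /\ e2 q j = e2 j q) ->
  \sum_(1 <= j < m.+1) \sum_(1 <= q < m.+1)
     (s j * y j / pi0) * (s q * y q / pi0) * (e2 j q - pi0 * pi0)
  = p^-1 * (\sum_(1 <= j < m.+1) y j ^+ 2)
    + 2 * \sum_(1 <= j < m.+1) \sum_(j.+1 <= q < m.+1) p ^+ (q - j - 1) * y j * y q.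
Proof.
move=> Hs He1 He2.
pose T j q := p ^+ (q - j - 1) * y j * y q.
pose G j q := if (j < q)%N then T j q else if (q < j)%N then T q j else y j ^+ 2 / p.
have Gs j q : G j q = G q j.
  rewrite /G; case: (ltngtP j q) => // ->; done.
have Lt j q : (0 < j)%N -> (j < q)%N -> (q <= m)%N ->
   (s j * y j / pi0) * (s q * y q / pi0) * (e2 j q - pi0 * pi0) = T j q.
  move=> H1 H2 H3; have [E _] := He2 j q H1 H2 H3.
  have S := Hs j q ltac:(lia) ltac:(lia).
  rewrite E (mulrACA (s j * y j)) (mulrACA (s j)) S /T.
  have [n Hn] : exists n, q = (j + n).+1 by exists (q - j.+1)%N; lia.
  rewrite Hn.
  have -> : ((j + n).+1.-1 - j = n)%N by lia.
  have -> : ((j + n).+1 - j - 1 = n)%N by lia.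
  have -> : (-1) ^+ (j + (j + n).+1) = - (-1) ^+ n :> R.
    by rewrite addnS exprS addnA exprD -signr_odd oddD addbb expr0 mul1r mulN1r.
  rewrite (exprNn p).
  set P := (-1) ^+ n : R.
  have P2 : P * P = 1 by rewrite /P -exprD -signr_odd oddD addbb.
  transitivity (P * P * (p ^+ n * y j * y (j + n).+1)); last by rewrite P2 mul1r.
  rewrite /pi0; field; apply/andP; split => //.
have FG j q : (0 < j <= m)%N -> (0 < q <= m)%N ->
   (s j * y j / pi0) * (s q * y q / pi0) * (e2 j q - pi0 * pi0) = G j q.
  move=> Hj Hq; rewrite /G.
  case: (ltngtP j q) => Hjq.
  - by apply: Lt; lia.
  - have [_ E] := He2 q j ltac:(lia) Hjq ltac:(lia).
    by rewrite E mulrC -mulrA mulrC -Lt; [ring| lia..].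
  - subst q; rewrite He1 //.
    have S2 := Hs j j Hj Hj.
    rewrite -signr_odd oddD addbb expr0 in S2.
    rewrite (mulrACA (s j * y j)) (mulrACA (s j)) S2 mul1r /pi0; field.
    by apply/andP; split.
rewrite (eq_big_nat _ _ (F2 := fun j => \sum_(1 <= q < m.+1) G j q)); last first.
  move=> j Hj; apply: eq_big_nat => q Hq; apply: FG; lia.
rewrite sym_split //.
congr (_ + _).
  rewrite big_distrr /=; apply: eq_big_nat => j _.
  by rewrite /G ltnn mulrC.
congr (_ * _); apply: eq_big_nat => j _; apply: eq_big_nat => q Hq.
by rewrite /G ifT //; lia.
Qed.

Lemma Var_ext k cyc (X X' : {ffun 'I_k -> bool} -> R) :
  (forall w, X w = X' w) -> Var p k cyc X = Var p k cyc X'.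
Proof.
move=> E; rewrite /Var /Expect.
by congr (_ - _ ^+ 2); apply: eq_bigr => w _; rewrite E.
Qed.

Lemma Ind_sq b : Ind b * Ind b = Ind b.
Proof. by case: b; rewrite /Ind /= ?mulr1 ?mulr0. Qed.
Lemma Ind_C a b : Ind (~~ a && ~~ b) = Cmp a * Cmp b.
Proof. by case: a; case: b; rewrite /Ind /Cmp /= ?subrr ?subr0 ?mulr0 ?mul0r ?mulr1. Qed.
Lemma Ind_Cmp b : Ind b * Cmp b = 0.
Proof. by case: b; rewrite /Ind /Cmp /= ?subrr ?mulr0 ?mul0r. Qed.

Lemma HT_lin (A : finType) (Mt Mc : {set {set A}}) (Y : {set A} -> R) v k cyc :
  Var p k cyc (HT Mt Mc Y v p k cyc) =
  Var p k cyc (fun w => \sum_(1 <= j < k.+1)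
     (sgn Mt Mc v j * Y (edge v j) / probW1 p k cyc j) * Ind (wv w j)).
Proof.
apply: Var_ext => w; rewrite /HT; apply: eq_bigr => j _.
rewrite /sgn /Ind; ring.
Qed.

Lemma split_last n (F : nat -> nat -> R) : (0 < n)%N -> (forall j, F j n = F n j) ->
  \sum_(1 <= j < n.+1) \sum_(1 <= q < n.+1) F j q =
  \sum_(1 <= j < n) \sum_(1 <= q < n) F j q + F n n + 2 * \sum_(1 <= j < n) F j n.
Proof.
move=> Hn Fs.
rewrite big_nat_recr //= big_nat_recr //=.
rewrite (eq_bigr (fun j => \sum_(1 <= q < n) F j q + F j n)); last first.
  by move=> j _; rewrite big_nat_recr.
rewrite big_split /= (eq_bigr (fun q => F q n) (fun q _ => esym (Fs q))).
set X := \sum_(1 <= i < n) \sum_(1 <= q < n) F i q.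
set Z := \sum_(1 <= i < n) F i n.
ring.
Qed.

Definition pik m : R := (1 - p ^+ 2 * (- p) ^+ (m - 2)) / (1 + p) ^+ 2.

Lemma pik_odd m : odd m -> (1 < m)%N -> pik m = (1 + p ^+ m) / (1 + p) ^+ 2.
Proof.
move=> Ho Hm; rewrite /pik exprNn -signr_odd.
have -> : odd (m - 2) = odd m.
  by rewrite -{2}(subnK Hm) oddD addbF.
rewrite Ho expr1 mulN1r mulrN -exprD subnKC // opprK.
done.
Qed.

Lemma last_term (pn0 : p != 0) m (sk yk : R) : odd m -> (1 < m)%N ->
  1 + p ^+ m != 0 -> sk * sk = 1 ->
  (sk * yk / pik m) * (sk * yk / pik m) * (pik m - pik m * pik m) =
  (p ^+ 2 + 2 * p - p ^+ m) / (1 + p ^+ m) * yk ^+ 2.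
Proof.
move=> Ho Hm Hpm S.
rewrite (mulrACA (sk * yk)) (mulrACA sk) S mul1r pik_odd //.
field; by rewrite Hpm p1.
Qed.

Lemma cross_term (pn0 : p != 0) m j (sj sk yj yk e2 : R) : odd m -> (1 < m)%N ->
  1 + p ^+ m != 0 -> (0 < j <= m)%N -> sj * sk = (-1) ^+ j ->
  e2 = (if j == 1%N then 0 else if j == m then 0 else
        p / (1 + p) ^+ 3 * (1 + p * (- p) ^+ (j - 2)) * (1 + p * (- p) ^+ (m - 1 - j))) ->
  (sj * yj / pi0) * (sk * yk / pik m) * (e2 - pi0 * pik m) =
  (-1) ^+ j * ((1 - (- p) ^+ (m.+1 - 1 - j)) * (1 - (- p) ^+ (j - 1)) / (1 + p ^+ m) - 1)
    * yj * yk.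
Proof.
move=> Ho Hm Hpm Hj S ->.
rewrite (mulrACA (sj * yj)) (mulrACA sj) S pik_odd // /pi0.
have Hp3 : (1 + p) ^+ 3 != 0 by rewrite expf_neq0.
have Hp2 : (1 + p) ^+ 2 != 0 by rewrite expf_neq0.
case: eqP => [->|H1].
  rewrite subnn expr0 subrr mulr0 mul0r; field.
  by rewrite Hpm pn0 p1.
case: eqP => [->|H2].
  have -> : (m.+1 - 1 - m = 0)%N by lia.
  rewrite expr0 subrr mul0r mul0r; field.
  by rewrite Hpm pn0 p1.
have -> : (j - 1 = (j - 2).+1)%N by lia.
have -> : (m.+1 - 1 - j = (m - 1 - j).+1)%N by lia.
rewrite !exprS; field.
by rewrite Hpm pn0 p1.
Qed.

Lemma sign_dbl n : (-1) ^+ (n + n) = 1 :> R.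
Proof. by rewrite -signr_odd oddD addbb. Qed.
Lemma sign_shift m j : odd m -> (-1) ^+ (j + m.+1) = (-1) ^+ j :> R.
Proof. by move=> Ho; rewrite -signr_odd oddD /= Ho addbF signr_odd. Qed.
End S.

Unset Implicit Arguments.
Set Strict Implicit.

Theorem theorem1 (R : realFieldType) (A : finType) (Mt Mc : {set {set A}})
    (Y : {set A} -> R) (p : R) (k : nat) (v : nat -> A) :
  0 < p -> p < 1 ->
  is_matching Mt -> is_matching Mc ->
  alt_component Mt Mc k v ->
  let y := fun j => Y (edge v j) in
  (v k.+1 != v 1%N ->
     Var p k false (HT Mt Mc Y v p k false) =
       p^-1 * (\sum_(1 <= j < k.+1) y j ^+ 2)
       + 2 * \sum_(1 <= j < k.+1) \sum_(j.+1 <= q < k.+1)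
               p ^+ (q - j - 1) * y j * y q) /\
  (v k.+1 = v 1%N ->
     Var p k true (HT Mt Mc Y v p k true) =
       p^-1 * (\sum_(1 <= j < k) y j ^+ 2)
       + 2 * (\sum_(1 <= j < k) \sum_(j.+1 <= q < k)
               p ^+ (q - j - 1) * y j * y q)
       + (p ^+ 2 + 2 * p - p ^+ k.-1) / (1 + p ^+ k.-1) * y k ^+ 2
       + 2 * \sum_(1 <= j < k)
               (-1) ^+ j
               * ((1 - (- p) ^+ (k - 1 - j)) * (1 - (- p) ^+ (j - 1))
                    / (1 + p ^+ k.-1) - 1)
               * y j * y k).
Proof.
move=> p0 _ HMt HMc H y.
have p1 : 1 + p != 0 by apply: lt0r_neq0; lra.
have pn0 : p != 0 by apply: lt0r_neq0.
have Hk : (0 < k)%N by case: H.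
split=> [_ | Hc].
  rewrite HT_lin Var_lin.
  rewrite -(@core R p p1 pn0 k (sgn R Mt Mc v) y
     (fun j q => Expect p k false (fun w => Ind R (wv w j) * Ind R (wv w q)))).
  - have E1 i : (0 < i <= k)%N -> Expect p k false (fun w => Ind R (wv w i)) = pi0 p.
      by move=> Hi; exact: (EW1 p1 Hi).
    have P1 i : (0 < i <= k)%N -> probW1 p k false i = pi0 p.
      by move=> Hi; exact: (EW1 p1 Hi).
    apply: eq_big_nat => j Hj; apply: eq_big_nat => q Hq.
    have Hj' : (0 < j <= k)%N by lia.
    have Hq' : (0 < q <= k)%N by lia.
    by rewrite (P1 j Hj') (P1 q Hq') (E1 j Hj') (E1 q Hq').
  - by move=> j q Hj Hq; apply: (sgn_prod p1 H).
  - move=> j Hj; rewrite /Expect.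
    under eq_bigr => w _ do rewrite Ind_sq.
    exact: EW1.
  - move=> j q H1 H2 H3; split.
      exact: EW2.
    by rewrite /Expect; apply: eq_bigr => w _; rewrite (mulrC (Ind R _)).
have [k3 kev] := cyc_par p1 HMt HMc H Hc.
have [m Hm] : exists m, k = m.+1 by exists k.-1; lia.
subst k.
have m1 : (1 < m)%N by lia.
have m0 : (0 < m)%N by lia.
have mo : odd m by move: kev; rewrite /= negbK.
have Hpm : 1 + p ^+ m != 0.
  by apply: lt0r_neq0; have := exprn_gt0 m p0; lra.
have Ec1 j : (0 < j <= m)%N -> Expect p m.+1 true (fun w => Ind R (wv w j)) = pi0 p.
  move=> Hj; rewrite /Expect cyc_red //.
  under eq_bigr => w _ do rewrite wv_ext_lt //.
  exact: EW1.
have Eck : Expect p m.+1 true (fun w => Ind R (wv w m.+1)) = pik p m.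
  rewrite /Expect cyc_red //.
  under eq_bigr => w _ do rewrite wv_ext_k Ind_C.
  exact: EC2.
have Ec2 j q : (0 < j <= m)%N -> (0 < q <= m)%N ->
    Expect p m.+1 true (fun w => Ind R (wv w j) * Ind R (wv w q)) =
    Expect p m false (fun w => Ind R (wv w j) * Ind R (wv w q)).
  move=> Hj Hq; rewrite /Expect cyc_red //.
  by apply: eq_bigr => w _; rewrite !wv_ext_lt.
have Ec2k j : (0 < j <= m)%N ->
    Expect p m.+1 true (fun w => Ind R (wv w j) * Ind R (wv w m.+1)) =
    (if j == 1%N then 0 else if j == m then 0 else
        p / (1 + p) ^+ 3 * (1 + p * (- p) ^+ (j - 2)) * (1 + p * (- p) ^+ (m - 1 - j))).
  move=> Hj; rewrite /Expect cyc_red //.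
  under eq_bigr => w _ do rewrite wv_ext_lt // wv_ext_k Ind_C.
  case: eqP => [->|H1].
    by rewrite big1 // => w _; rewrite (mulrA (Ind R _)) Ind_Cmp mul0r mulr0.
  case: eqP => [->|H2].
    by rewrite big1 // => w _; rewrite (mulrCA (Ind R _)) Ind_Cmp mulr0 mulr0.
  apply: EC3 => //; lia.
have Ekk : Expect p m.+1 true (fun w => Ind R (wv w m.+1) * Ind R (wv w m.+1)) = pik p m.
  rewrite -Eck; rewrite /Expect; apply: eq_bigr => w _; by rewrite Ind_sq.
have P1 j : (0 < j <= m)%N -> probW1 p m.+1 true j = pi0 p by move=> Hj; exact: Ec1.
have Pk : probW1 p m.+1 true m.+1 = pik p m by exact: Eck.
have Hs j q : (0 < j <= m.+1)%N -> (0 < q <= m.+1)%N ->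
    sgn R Mt Mc v j * sgn R Mt Mc v q = (-1) ^+ (j + q).
  by move=> Hj Hq; apply: (sgn_prod p1 H).
rewrite HT_lin Var_lin split_last //; last first.
  move=> j; rewrite /Expect (eq_bigr (fun w => design_pmf p m.+1 true w * (Ind R (wv w m.+1) * Ind R (wv w j)))); last first.
    by move=> w _; rewrite (mulrC (Ind R _)).
  ring.
rewrite (_ : m.+1.-1 = m) //.
congr (_ + _ + _).
- rewrite -(@core R p p1 pn0 m (sgn R Mt Mc v) y
     (fun j q => Expect p m false (fun w => Ind R (wv w j) * Ind R (wv w q)))).
  + apply: eq_big_nat => j Hj; apply: eq_big_nat => q Hq.
    have Hj' : (0 < j <= m)%N by lia.
    have Hq' : (0 < q <= m)%N by lia.
    by rewrite (P1 j Hj') (P1 q Hq') (Ec1 j Hj') (Ec1 q Hq') (Ec2 j q Hj' Hq').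
  + by move=> j q Hj Hq; apply: Hs; lia.
  + move=> j Hj; rewrite /Expect.
    under eq_bigr => w _ do rewrite Ind_sq.
    exact: EW1.
  + move=> j q H1 H2 H3; split.
      exact: EW2.
    by rewrite /Expect; apply: eq_bigr => w _; rewrite (mulrC (Ind R _)).
- rewrite Pk Ekk Eck; apply: last_term => //.
  rewrite Hs; [exact: sign_dbl | lia | lia].
- congr (2 * _); apply: eq_big_nat => j Hj.
  have Hj' : (0 < j <= m)%N by lia.
  rewrite (P1 j Hj') Pk (Ec1 j Hj') Eck.
  apply: cross_term => //.
    rewrite Hs; [exact: sign_shift | lia | lia].
  exact: Ec2k.
Qed.
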